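(* Let $k$ and $M$ be positive integers, and let $M=p_{1}^{e_{1}}p_{2}^{e_{2}}\cdots p_{l}^{e_{l}}$ be the prime factorization of $M$, where $p_1,\dots,p_l$ are distinct primes. For any integers $n,m\geq \max\{e_j \mid 1\leq j\leq l\}$ satisfying $n\equiv m \pmod{\varphi(M)}$, we have \[ B^{(-k)}_{n}\equiv B^{(-k)}_{m}\pmod{M}. \]
   Context: For any integer $k$, let $\mathrm{Li}_k(t)=\sum_{n=1}^{\infty} t^n/n^k$. The poly-Bernoulli numbers $B^{(k)}_n$ ($n\ge 0$) are defined by the generating series $\frac{\mathrm{Li}_k(1-e^{-t})}{1-e^{-t}}=\sum_{n=0}^{\infty}B^{(k)}_n\frac{t^n}{n!}$. For negative upper index these are integers. $\varphi$ denotes Euler's totient function. *)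

(* Defs.v *)
From HB Require Import structures.
From mathcomp Require Import all_boot all_order all_algebra.
Set Implicit Arguments. Unset Strict Implicit. Unset Printing Implicit Defensive.
Import Order.TTheory GRing.Theory Num.Theory.
Local Open Scope ring_scope.

(* Truncation to degree n of the formal power series 1 - e^{-t}
   = sum_{i>=1} (-1)^(i+1) t^i / i!, with rational coefficients. *)
Definition one_minus_exp_neg (n : nat) : {poly rat} :=
  \poly_(i < n.+1) (if i == 0%N then 0 else (- (-1) ^+ i) / (i`!)%:R).

(* Poly-Bernoulli numbers with negative upper index -k (k : nat):
   Li_{-k}(x)/x = sum_{m>=0} (m+1)^k x^m, so
   Li_{-k}(1-e^{-t})/(1-e^{-t}) = sum_{m>=0} (m+1)^k (1-e^{-t})^m
   (a well-defined formal power series since 1-e^{-t} has zero constant term;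
   only m <= n contributes to the coefficient of t^n).
   polyBernNeg k n = B_n^{(-k)} = n! * [t^n] of this series. *)
Definition polyBernNeg (k n : nat) : rat :=
  (n`!)%:R *
  (\sum_(m < n.+1) ((m.+1) ^ k)%:R *: (one_minus_exp_neg n) ^+ m)`_n.

(* Main.v *)
Require Import Defs.
From HB Require Import structures.
From mathcomp Require Import all_boot all_order all_algebra.
From mathcomp Require Import cyclic ring zify.
Import Order.TTheory GRing.Theory Num.Theory.

Lemma expmod1 a q c : a = 1 %[mod q] -> a ^ c = 1 %[mod q].
Proof. by move=> h; rewrite -modnXm h modnXm exp1n. Qed.

Lemma nt_main (M a n n' : nat) : 0 < M -> 0 < a -> n <= n' ->
  (forall p, p \in \pi(M) -> logn p M <= n) ->
  totient M %| n' - n -> a ^ n = a ^ n' %[mod M].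
Proof.
move=> M0 a0 nn' hn hd.
have le: a ^ n <= a ^ n' by rewrite leq_pexp2l.
apply/eqP; rewrite eq_sym eqn_mod_dvd //.
apply/(dvdn_partP _ M0) => p pM.
have pp : prime p by move: pM; rewrite mem_primes => /andP[].
have [pa|npa] := boolP (p %| a).
  have h : M`_p %| a ^ n.
    rewrite p_part; apply: dvdn_trans (dvdn_exp2r _ pa).
    by rewrite dvdn_Pexp2l ?prime_gt1 ?hn.
  apply: dvdn_sub => //; rewrite -(subnKC nn') expnD; exact: dvdn_mulr.
have co : coprime a M`_p.
  rewrite p_part coprimeXr // coprime_sym prime_coprime //.
have E := Euler_exp_totient co.
have dv : totient M`_p %| n' - n.
  apply: dvdn_trans hd; rewrite -{2}(partnC p M0) totient_coprime ?coprime_partC //.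
  exact: dvdn_mulr.
case/dvdnP: dv => c hc.
rewrite -eqn_mod_dvd // -(subnKC nn') expnD hc.
rewrite [c * _]mulnC expnM.
by rewrite -modnMmr (@expmod1 _ _ c E) modnMmr muln1.
Qed.
Local Open Scope ring_scope.
Definition Ep (c : rat) (N : nat) : {poly rat} :=
  \poly_(j < N.+1) (c ^+ j / (j`!)%:R).

Lemma omE N : one_minus_exp_neg N = 1 - Ep (-1) N.
Proof.
apply/polyP => i; rewrite coefB coef1 !coef_poly.
case: ltnP => hi; case: eqP => [e|_] /=; try subst i.
- by rewrite expr0 fact0 divr1 subrr.
- by rewrite sub0r mulNr.
- by move: hi.
- by rewrite subr0.
Qed.

Lemma coefEX c N i n : (n <= N)%N ->
  (Ep c N ^+ i)`_n = (c * i%:R) ^+ n / (n`!)%:R.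
Proof.
elim: i n => [|i IH] n nN.
  rewrite expr0 coef1 mulr0 expr0n.
  by case: n nN => [|n] _ /=; rewrite ?fact0 ?divr1 ?mul0r.
rewrite exprSr coefM.
have -> : (c * i.+1%:R) ^+ n / (n`!)%:R =
   \sum_(j < n.+1) ((c * i%:R) ^+ j / (j`!)%:R) * (c ^+ (n - j) / ((n - j)`!)%:R).
  rewrite -[i.+1]add1n natrD mulrDr mulr1 exprDn mulr_suml.
  apply: eq_bigr => j _.
  have jn : (j <= n)%N by rewrite -ltnS.
  have f0 : forall q, (q`!)%:R != 0 :> rat by move=> q; rewrite pnatr_eq0 -lt0n fact_gt0.
  rewrite -mulr_natr.
  have hb : ('C(n, j))%:R = (n`!)%:R / ((j`!)%:R * ((n - j)`!)%:R) :> rat.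
    by rewrite -(bin_fact jn) natrM natrM mulfK // mulf_neq0.
  rewrite hb; field.
  by rewrite !f0.
apply: eq_bigr => j _.
have jn : (j <= n)%N by rewrite -ltnS.
rewrite IH ?(leq_trans jn) // coef_poly ltnS (leq_trans (leq_subr _ _) nN).
by [].
Qed.

Lemma coef_vanish (p : {poly rat}) m n : p`_0 = 0 -> (n < m)%N -> (p ^+ m)`_n = 0.
Proof.
move=> p0; elim: m n => [//|m IH] n nm.
rewrite exprS coefM big1 // => [[j jn]] _ /=.
case: j jn => [|j] jn; first by rewrite p0 mul0r.
by rewrite IH ?mulr0 //; lia.
Qed.

Lemma coef_signM (p : {poly rat}) i n : ((-1) ^+ i * p)`_n = (-1) ^+ i * p`_n.
Proof.
rewrite -signr_odd mulr_sign -[in RHS]signr_odd mulr_sign.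
by case: (odd i); rewrite ?coefN.
Qed.

Lemma coefOM N m n : (n <= N)%N ->
  (one_minus_exp_neg N ^+ m)`_n * (n`!)%:R =
  \sum_(i < m.+1) ('C(m, i))%:R * (-1) ^+ i * (- (i%:R)) ^+ n.
Proof.
move=> nN; rewrite omE exprBn coef_sum mulr_suml; apply: eq_bigr => i _.
rewrite coefMn expr1n mulr1 coef_signM coefEX // mulN1r.
have f0 : (n`!)%:R != 0 :> rat by rewrite pnatr_eq0 -lt0n fact_gt0.
rewrite -mulr_natr; field; exact: f0.
Qed.

Definition Sr (m n : nat) : rat :=
  \sum_(i < m.+1) ('C(m, i))%:R * (-1) ^+ i * (- (i%:R)) ^+ n.

Lemma Sr0 m n : (n < m)%N -> Sr m n = 0.
Proof.
move=> nm; rewrite /Sr -(@coefOM n m n (leqnn n)) coef_vanish ?mul0r //.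
by rewrite /one_minus_exp_neg coef_poly.
Qed.

Lemma Bform1 k n : polyBernNeg k n = \sum_(m < n.+1) ((m.+1) ^ k)%:R * Sr m n.
Proof.
rewrite /polyBernNeg coef_sum mulr_sumr; apply: eq_bigr => m _.
by rewrite coefZ mulrCA [_ * _`_n]mulrC (@coefOM n m n (leqnn n)) mulrC.
Qed.

Lemma Bform2 k n d : polyBernNeg k n = \sum_(m < (n + d).+1) ((m.+1) ^ k)%:R * Sr m n.
Proof.
elim: d => [|d IH]; first by rewrite addn0 Bform1.
by rewrite addnS big_ord_recr /= IH Sr0 ?mulr0 ?addr0 // ltnS leq_addr.
Qed.

Definition Bz (k N n : nat) : int :=
  \sum_(m < N.+1) ((m.+1) ^ k)%:Z * \sum_(i < m.+1) ('C(m, i))%:Z * (-1) ^+ i * (- (i%:Z)) ^+ n.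

Lemma Bform k N n : (n <= N)%N -> polyBernNeg k n = (Bz k N n)%:~R.
Proof.
move=> nN; rewrite (Bform2 k n (N - n)) (subnKC nN) /Bz rmorph_sum; apply: eq_bigr => m _.
rewrite rmorphM rmorph_sum /Sr; congr (_ * _).
apply: eq_bigr => i _.
by rewrite !rmorphM !rmorphXn !rmorphN /= !pmulrn.
Qed.

Lemma key_int (M i n n' : nat) : (0 < M)%N ->
  (forall p, p \in \pi(M) -> (logn p M <= n)%N) ->
  (forall p, p \in \pi(M) -> (logn p M <= n')%N) ->
  n = n' %[mod totient M] ->
  (M%:Z %| (- (i%:Z)) ^+ n - (- (i%:Z)) ^+ n')%Z.
Proof.
move=> M0 hn hn' hmod.
set b : nat := (i * (M - 1) + M)%N.
have b0 : (0 < b)%N by rewrite /b addn_gt0 M0 orbT.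
have hb : (M%:Z %| - (i%:Z) - b%:Z)%Z.
  have -> : - (i%:Z) - b%:Z = - ((i.+1)%:Z * M%:Z).
    have e : (b + i = i.+1 * M)%N by rewrite /b; nia.
    by rewrite -opprD addrC -PoszD e PoszM.
  by rewrite rpredN dvdz_mull.
have hX : forall e, (M%:Z %| (- (i%:Z)) ^+ e - (b%:Z) ^+ e)%Z.
  by move=> e; rewrite subrXX dvdz_mulr.
have hbb : forall e e', (e <= e')%N ->
   (forall p, p \in \pi(M) -> (logn p M <= e)%N) ->
   e = e' %[mod totient M] ->
   (M%:Z %| (b%:Z) ^+ e - (b%:Z) ^+ e')%Z.
  move=> e e' ee' he hm.
  have := @nt_main M b e e' M0 b0 ee' he.
  rewrite -eqn_mod_dvd // eq_sym hm => /(_ (eqxx _)) hbe.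
  rewrite -eqz_mod_dvd -!natz -!natrX !natz !modz_nat hbe //.
have -> : (- (i%:Z)) ^+ n - (- (i%:Z)) ^+ n' =
   ((- (i%:Z)) ^+ n - (b%:Z) ^+ n) + ((b%:Z) ^+ n - (b%:Z) ^+ n')
   - ((- (i%:Z)) ^+ n' - (b%:Z) ^+ n').
  by rewrite addrA subrK opprB addrA subrK.
apply: rpredB; last exact: hX.
apply: rpredD; first exact: hX.
have [le|le] := leqP n n'; first exact: hbb.
by rewrite -opprB rpredN; apply: hbb; [exact: ltnW|exact: hn'|].
Qed.

Theorem corollary2p3 (k M n m : nat) :
  (0 < k)%N -> (0 < M)%N ->
  (\max_(p < M.+1) logn p M <= n)%N ->
  (\max_(p < M.+1) logn p M <= m)%N ->
  n = m %[mod totient M] ->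
  exists z : int, polyBernNeg k n - polyBernNeg k m = M%:R * z%:~R.
Proof.
move=> k0 M0 hn hm hmod.
have hp : forall e, (\max_(p < M.+1) logn p M <= e)%N ->
    forall p, p \in \pi(M) -> (logn p M <= e)%N.
  move=> e he p pM; apply: leq_trans he.
  have pM' : (p < M.+1)%N.
    by rewrite ltnS dvdn_leq //; move: pM; rewrite mem_primes => /and3P[].
  exact: (@leq_bigmax _ (fun q : 'I_M.+1 => logn q M) (Ordinal pM')).
have D : (M%:Z %| Bz k (n + m) n - Bz k (n + m) m)%Z.
  rewrite /Bz -sumrB; apply: rpred_sum => j _.
  rewrite -mulrBr dvdz_mull // -sumrB; apply: rpred_sum => i _.
  rewrite -mulrBr dvdz_mull //.
  exact: key_int (hp _ hn) (hp _ hm) hmod.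
exists ((Bz k (n + m) n - Bz k (n + m) m) %/ M%:Z)%Z.
rewrite (@Bform k (n + m) n (leq_addr _ _)) (@Bform k (n + m) m (leq_addl _ _)).
by rewrite -rmorphB -[M%:R]/((M%:Z)%:~R) -rmorphM mulrC divzK.
Qed.
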